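(* Let $G$ be a connected graph, $c\in V(G)$, and run the scan procedure at $c$ (with any processing order). If $e=cu_1$ and $f=cu_2$ are edges incident to $c$ with $(e,f)\in\beta_c$, then it is not the case that $e$ and $f$ span a unique square which is chordless and has a unique top vertex.
   Context: All graphs are finite, simple, undirected; $N(x)$ is the open neighborhood of $x$. For distinct edges $e=vu$, $f=vw$ sharing the vertex $v$, a square spanned by $e$ and $f$ is a 4-cycle $vuxw$ with $x\ne v$ adjacent to both $u$ and $w$; $x$ is its top vertex. The square is chordless if it is an induced 4-cycle, i.e. $uw\notin E$ and $vx\notin E$. The edges $e,f$ span a unique square if $|N(u)\cap N(w)|=2$ (exactly one top vertex exists). A top vertex $x$ is unique if $|N(x)\cap N(v)|=2$. Scan procedure at $c$: the vertices of $N(c)$ are called primal, and edges incident to $c$ primal edges. Maintain two sets $I$ (incidence list) and $A$ (absence list) of unordered pairs of primal edges, both initially empty, and for every non-primal vertex $w\ne c$ a record of at most two ''recorded primal neighbors'' (first and second), initially none. Process the neighbors $u$ of $c$ one by one in an arbitrary order, and for each such $u$ process its neighbors $w\neq c$ in an arbitrary order: (1) if $w\in N(c)$, add $\{cu,cw\}$ to $A$; (2) else, if $w$ has no recorded primal neighbor, record $u$ as its first primal neighbor; (3) else, if $w$ has exactly one recorded primal neighbor $v$, record $u$ as its second primal neighbor, and if $\{cu,cv\}\notin I$ add $\{cu,cv\}$ to $I$, otherwise add $\{cu,cv\}$ to $A$; (4) else ($w$ has recorded first and second primal neighbors $v_1,v_2$) add $\{cv_1,cv_2\},\{cv_1,cu\},\{cv_2,cu\}$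 to $A$ (the record is not changed). After the procedure, $\alpha_c$ is the symmetric relation on primal edges consisting of the pairs in $I$, $\beta_c$ the symmetric relation consisting of the pairs in $A$, and $\overline{\alpha}_c$ the set of pairs of primal edges not in $I$. *)

(* Defs.v *)
From mathcomp Require Import all_boot.
Set Implicit Arguments.
Unset Strict Implicit.
Unset Printing Implicit Defensive.

Definition simple_graph (T : finType) (adj : rel T) : Prop :=
  symmetric adj /\ irreflexive adj.

Definition connected_graph (T : finType) (adj : rel T) : Prop :=
  forall x y : T, connect adj x y.

Definition N (T : finType) (adj : rel T) (x : T) : {set T} := [set y | adj x y].

Definition unique_square (T : finType) (adj : rel T) (v u w : T) : Prop :=
  #|N adj u :&: N adj w| = 2.

Definition top_vertex (T : finType) (adj : rel T) (v u w x : T) : Prop :=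
  [/\ x != v, adj u x & adj w x].

Definition chordless_square (T : finType) (adj : rel T) (v u w x : T) : Prop :=
  ~~ adj u w /\ ~~ adj v x.

Definition unique_top (T : finType) (adj : rel T) (v x : T) : Prop :=
  #|N adj x :&: N adj v| = 2.

Definition unique_chordless_square_unique_top
    (T : finType) (adj : rel T) (v u w : T) : Prop :=
  [/\ adj v u, adj v w, u != w, unique_square adj v u w &
      exists x, [/\ top_vertex adj v u w x, chordless_square adj v u w x
                  & unique_top adj v x]].

(* A primal edge c u is represented by its endpoint u; an unordered pair of
   primal edges {c u, c v} is represented by the 2-set [set u; v]. *)
Record scan_state (T : finType) := ScanState {
  I_list : {set {set T}};
  A_list : {set {set T}};
  record : T -> seq T            (* recorded primal neighbours (at most two) *)
}.

(* Processing the neighbour w (<> c) of the primal vertex u. *)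
Definition scan_step (T : finType) (adj : rel T) (c u : T)
    (st : scan_state T) (w : T) : scan_state T :=
  let I := I_list st in
  let A := A_list st in
  let r := record st in
  if adj c w then ScanState I ([set u; w] |: A) r
  else match r w with
  | [::] => ScanState I A (fun y => if y == w then [:: u] else r y)
  | [:: v] =>
      let r' := fun y => if y == w then [:: v; u] else r y in
      if [set u; v] \in I then ScanState I ([set u; v] |: A) r'
      else ScanState ([set u; v] |: I) A r'
  | v1 :: v2 :: _ =>
      ScanState I ([set v1; v2] |: ([set v1; u] |: ([set v2; u] |: A))) r
  end.

Definition scan (T : finType) (adj : rel T) (c : T)
    (ordc : seq T) (ordn : T -> seq T) : scan_state T :=
  foldl (fun st u => foldl (scan_step adj c u) st (ordn u))
        (ScanState set0 set0 (fun _ => [::])) ordc.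

Definition valid_order (T : finType) (adj : rel T) (c : T)
    (ordc : seq T) (ordn : T -> seq T) : Prop :=
  perm_eq ordc (enum (N adj c)) /\
  forall u, u \in N adj c ->
    perm_eq (ordn u) (enum [set w | adj u w & w != c]).

Definition beta (T : finType) (adj : rel T) (c : T)
    (ordc : seq T) (ordn : T -> seq T) (u v : T) : bool :=
  [set u; v] \in A_list (scan adj c ordc ordn).

(* Main.v *)
Require Import Defs.
From mathcomp Require Import all_boot.

Definition Inv (T : finType) (adj : rel T) (c x u1 u2 : T) (st : scan_state T) : Prop :=
 [/\ (forall w v, v \in record st w -> [/\ adj c v, adj v w & w != c]),
     uniq (record st x),
     (forall p, p \in I_list st -> exists w a b s,
         [/\ w != c, record st w = a :: b :: s & p = [set a; b]]) &
     [set u1; u2] \notin A_list st].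

Theorem mainTheorem3 (T : finType) (adj : rel T) (c : T)
    (ordc : seq T) (ordn : T -> seq T) (u1 u2 : T) :
  simple_graph adj ->
  connected_graph adj ->
  valid_order adj c ordc ordn ->
  adj c u1 -> adj c u2 ->
  beta adj c ordc ordn u1 u2 ->
  ~ unique_chordless_square_unique_top adj c u1 u2.
Proof.
move=> [sym irr] _ [Hordc Hordn] cu1 cu2 Hb
  [_ _ u12 Hsq [x [[xc u1x u2x] [nu12 ncx] Htop]]].
have in2 : forall (S : {set T}) a b y, #|S| = 2 -> a \in S -> b \in S ->
    a != b -> y \in S -> (y == a) || (y == b).
  move=> S a b y HS aS bS ab yS.
  have E : [set a; b] = S.
    apply/eqP; rewrite eqEcard HS cards2 ab andbT.
    by apply/subsetP=> z; rewrite !inE => /orP[/eqP->|/eqP->].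
  by move: yS; rewrite -E !inE.
have sq : forall w, adj u1 w -> adj u2 w -> w = c \/ w = x.
  move=> w h1 h2; have := in2 _ c x w Hsq.
  rewrite /N !inE (sym u1 c) cu1 (sym u2 c) cu2 u1x u2x h1 h2 eq_sym xc.
  by move=> /(_ isT isT isT isT) /orP[/eqP|/eqP]; auto.
have top : forall v, adj c v -> adj v x -> v = u1 \/ v = u2.
  move=> v h1 h2; have := in2 _ u1 u2 v Htop.
  rewrite /N !inE (sym x u1) u1x (sym x u2) u2x cu1 cu2 (sym x v) h1 h2 u12.
  by move=> /(_ isT isT isT isT) /orP[/eqP|/eqP]; auto.
have pair_eq : forall a b, [set a; b] = [set u1; u2] ->
    (a = u1 /\ b = u2) \/ (a = u2 /\ b = u1).
  move=> a b E.
  have h1 : u1 \in [set a; b] by rewrite E set21.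
  have h2 : u2 \in [set a; b] by rewrite E set22.
  move: h1 h2; rewrite !inE => /orP[/eqP e1|/eqP e1] /orP[/eqP e2|/eqP e2].
  - by move: u12; rewrite e1 e2 eqxx.
  - by left.
  - by right.
  - by move: u12; rewrite e1 e2 eqxx.
have tox : forall w a b, w != c -> [set a; b] = [set u1; u2] ->
    adj a w -> adj b w -> w = x.
  move=> w a b wc /pair_eq [[-> ->]|[-> ->]] h1 h2.
  - by case: (sq w h1 h2) => // ew; rewrite ew eqxx in wc.
  - by case: (sq w h2 h1) => // ew; rewrite ew eqxx in wc.
have three : forall a b d, (a = u1 \/ a = u2) -> (b = u1 \/ b = u2) ->
    (d = u1 \/ d = u2) -> a != b -> d != a -> d != b -> False.
  by move=> a b d [->|->] [->|->] [->|->]; rewrite ?eqxx.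
have step : forall st u w, @Inv T adj c x u1 u2 st -> adj c u -> adj u w -> w != c ->
    (w = x -> u \notin record st x) ->
    [/\ @Inv T adj c x u1 u2 (scan_step adj c u st w),
        x != w -> record (scan_step adj c u st w) x = record st x &
        forall v, v \in record (scan_step adj c u st w) x ->
           v = u \/ v \in record st x].
  move=> [I A r] u w [/= R1 R2 R3 R4] cu uw wc hx; rewrite /scan_step /=.
  case: ifP => cw.
    split => //=; last by auto.
    split => //; rewrite !inE negb_or R4 andbT.
    apply/eqP => /esym /pair_eq [[e1 e2]|[e1 e2]].
      by move: nu12; rewrite -e1 -e2 uw.
    by move: nu12; rewrite -e1 -e2 sym uw.
  case E: (r w) => [|v [|v2 s]].
  - split => /=.
    + split => //=.
      * move=> y v'; case: eqP => [->|_]; last exact: R1.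
        by rewrite inE => /eqP ->.
      * by case: eqP.
      * move=> p /R3 [w' [a [b [s [h1 h2 h3]]]]].
        exists w', a, b, s; split => //; case: eqP => // ew.
        by rewrite ew E in h2.
    + by move=> /negbTE ->.
    + move=> v'; case: eqP => _; last by auto.
      by rewrite inE => /eqP; auto.
  - have [cv vw _] : [/\ adj c v, adj v w & w != c] by apply: R1; rewrite E inE.
    have R3' : forall p, p \in I -> exists w' a b s,
       [/\ w' != c, (if w' == w then [:: v; u] else r w') = a :: b :: s
          & p = [set a; b]].
      move=> p /R3 [w' [a [b [s [h1 h2 h3]]]]].
      exists w', a, b, s; split => //; case: eqP => // ew.
      by rewrite ew E in h2.
    have R1' : forall y v', v' \in (if y == w then [:: v; u] else r y) ->
        [/\ adj c v', adj v' y & y != c].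
      move=> y v'; case: eqP => [->|_]; last exact: R1.
      by rewrite !inE => /orP[/eqP->|/eqP->].
    have R2' : uniq (if x == w then [:: v; u] else r x).
      case: eqP => // ex; rewrite /= inE andbT.
      have := hx (esym ex); rewrite ex E inE eq_sym.
      by [].
    have sub : forall v', v' \in (if x == w then [:: v; u] else r x) ->
        v' = u \/ v' \in r x.
      move=> v'; case: eqP => ex; last by auto.
      rewrite !inE ex E inE => /orP[->|/eqP]; auto.
    case: ifP => Hin /=.
    + split => //; last by move=> /negbTE ->.
      split => //=; rewrite !inE negb_or R4 andbT.
      apply/eqP => /esym Euv.
      have := R3 _ Hin => [[w' [a [b [s [h1 h2 h3]]]]]].
      have [_ aw' _] : [/\ adj c a, adj a w' & w' != c] by apply: R1; rewrite h2 inE eqxx.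
      have [_ bw' _] : [/\ adj c b, adj b w' & w' != c]
        by apply: R1; rewrite h2 !inE eqxx orbT.
      have ew' := tox w' a b h1 (etrans (esym h3) Euv) aw' bw'.
      have ew := tox w u v wc Euv uw vw.
      by move: h2; rewrite ew' -ew E.
    + split => //; last by move=> /negbTE ->.
      split => //= p; case/setU1P => [->|/R3'] //.
      by exists w, v, u, [::]; rewrite eqxx setUC.
  - have [cv1 v1w _] : [/\ adj c v, adj v w & w != c] by apply: R1; rewrite E inE eqxx.
    have [cv2 v2w _] : [/\ adj c v2, adj v2 w & w != c]
      by apply: R1; rewrite E !inE eqxx orbT.
    have key : w = x -> False.
      move=> ew; move: (hx ew) R2; rewrite -ew E.
      rewrite !inE negb_or => /andP [uv1 /norP [uv2 _]].
      rewrite /= inE negb_or => /andP [/andP [v12 _] _].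
      rewrite -ew in top.
      by apply: (three v v2 u (top v cv1 v1w) (top v2 cv2 v2w) (top u cu uw)).
    split => //=; last by auto.
    split => //; rewrite !inE !negb_or R4 !andbT.
    apply/and3P; split; apply/eqP => /esym Ep; apply: key.
    + exact: (tox w v v2 wc Ep v1w v2w).
    + exact: (tox w v u wc Ep v1w uw).
    + exact: (tox w v2 u wc Ep v2w uw).
have inner : forall u L st, adj c u -> uniq L ->
    (forall w, w \in L -> adj u w /\ w != c) -> @Inv T adj c x u1 u2 st ->
    (x \in L -> u \notin record st x) ->
    @Inv T adj c x u1 u2 (foldl (scan_step adj c u) st L) /\
    (forall v, v \in record (foldl (scan_step adj c u) st L) x ->
       v = u \/ v \in record st x).
  move=> u L; elim: L => [|w L IH] st cu /= uL HL Hst hx.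
    by split => //; auto.
  move: uL => /andP [wL uL].
  have [uw wc] := HL w (mem_head _ _).
  have [Hst1 unch sub] := step st u w Hst cu uw wc
    (fun ew => hx ltac:(by rewrite ew mem_head)).
  have [Hf subf] := IH (scan_step adj c u st w) cu uL
    (fun w' h => HL w' ltac:(by rewrite inE h orbT)) Hst1
    (fun xL => ltac:(by rewrite unch; [apply: hx; rewrite inE xL orbT|
       apply/eqP => ex; move: wL; rewrite -ex xL])).
  split => // v /subf [->|/sub]; auto.
have outer : forall R st, uniq R -> (forall u, u \in R -> adj c u) ->
    @Inv T adj c x u1 u2 st -> (forall v, v \in record st x -> v \notin R) ->
    @Inv T adj c x u1 u2
      (foldl (fun st u => foldl (scan_step adj c u) st (ordn u)) st R).
  elim => [|u R IH] st //= /andP [uR uniqR] HR Hst hx.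
  have cu := HR u (mem_head _ _).
  have Hn := Hordn u ltac:(by rewrite /N inE).
  have [Hst' sub] := inner u (ordn u) st cu
    ltac:(by rewrite (perm_uniq Hn) enum_uniq)
    (fun w h => ltac:(by move: h; rewrite (perm_mem Hn) mem_enum inE => /andP []))
    Hst (fun _ => ltac:(by apply/negP => /hx; rewrite mem_head)).
  apply: IH => //.
    by move=> u' h; apply: HR; rewrite inE h orbT.
  move=> v /sub [->//|/hx]; by rewrite inE negb_or => /andP [].
have init : @Inv T adj c x u1 u2 (ScanState set0 set0 (fun _ => [::])).
  by split => //= [p|]; rewrite inE.
have := outer ordc _ ltac:(by rewrite (perm_uniq Hordc) enum_uniq)
  (fun u h => ltac:(by move: h; rewrite (perm_mem Hordc) mem_enum /N inE)) init
  (fun v => ltac:(by [])).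
by move=> [_ _ _]; move: Hb; rewrite /beta /scan => ->.
Qed.
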